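(* Let $k\ge 2$, let $H_0$ be a finite $k$-uniform hypergraph, let $(H_t)_{t\ge0}$ be the ILTH hypergraphs generated from $H_0$, and for each $t$ let $G(H_t)$ denote the 2-section of $H_t$. A finite graph $G$ admits a homomorphism to $G(H_0)$ if and only if $G$ is isomorphic to an induced subgraph of $G(H_t)$ for some integer $t\ge 0$. In particular, the set of isomorphism types of finite induced subgraphs of the graphs $G(H_t)$, $t\ge0$, is exactly the set of finite graphs admitting a homomorphism to $G(H_0)$.
   Context: A $k$-uniform hypergraph has every hyperedge a $k$-element subset of the vertex set. The ILTH process: given $H_t$, form $H_{t+1}$ by adding for each vertex $x\in V(H_t)$ a new vertex $x'$ (its clone), and taking $E(H_{t+1})=E(H_t)\cup\{(e\setminus\{x\})\cup\{x'\} : e\in E(H_t),\ x\in e\}$. The 2-section of a hypergraph is the graph on the same vertices in which distinct vertices are adjacent iff they lie in a common hyperedge. A homomorphism of graphs is a map on vertices sending edges to edges. *)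

(* Defs.v *)
From mathcomp Require Import all_boot.
Set Implicit Arguments. Unset Strict Implicit. Unset Printing Implicit Defensive.

Definition k_uniform (V : finType) (k : nat) (E : {set {set V}}) : Prop :=
  forall e, e \in E -> #|e| = k.

(* One ILTH step: the new vertex set is V + V, where inl x is the old vertex x
   and inr x is its clone x'. *)
Definition ilth_step (V : finType) (E : {set {set V}}) : {set {set (V + V)}} :=
  [set [set (@inl V V) y | y in e] | e : {set V} in E] :|:
  [set [set (@inl V V) y | y in e :\ x] :|: [set (@inr V V x)]
     | e : {set V} in E, x : V in e].

Fixpoint ilth_V (V : finType) (t : nat) : finType :=
  match t with
  | 0 => V
  | t'.+1 => ((ilth_V V t') + (ilth_V V t'))%type
  end.

Fixpoint ilth_E (V : finType) (E : {set {set V}}) (t : nat)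
  : {set {set ilth_V V t}} :=
  match t return {set {set ilth_V V t}} with
  | 0 => E
  | t'.+1 => ilth_step (ilth_E E t')
  end.

Definition two_section (V : finType) (E : {set {set V}}) : rel V :=
  fun x y => (x != y) && [exists e in E, (x \in e) && (y \in e)].

Definition graph_hom (T U : finType) (g : rel T) (h : rel U) (f : T -> U) : Prop :=
  forall x y, g x y -> h (f x) (f y).

Definition induced_embedding (T U : finType) (g : rel T) (h : rel U) (f : T -> U)
  : Prop := injective f /\ forall x y, g x y = h (f x) (f y).

(* Main.v *)
Require Import Defs.
From mathcomp Require Import all_boot.
Set Implicit Arguments. Unset Strict Implicit. Unset Printing Implicit Defensive.

Section Step.
Variable V : finType.
Variable E : {set {set V}}.

Lemma in_il_img (e : {set V}) x : (inl x \in [set (@inl V V) y | y in e]) = (x \in e).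
Proof. apply/imsetP/idP => [[y hy [->]]|hx] //; by exists x. Qed.

Lemma in_ir_img (e : {set V}) x : (inr x \in [set (@inl V V) y | y in e]) = false.
Proof. by apply/imsetP => -[y _]. Qed.

Lemma step_mem (e' : {set V + V}) :
  reflect ((exists2 e, e \in E & e' = [set (@inl V V) y | y in e]) \/
           (exists e x, [/\ e \in E, x \in e &
               e' = [set (@inl V V) y | y in e :\ x] :|: [set (@inr V V x)]]))
          (e' \in ilth_step E).
Proof.
rewrite /ilth_step inE; apply: (iffP orP).
  case=> [/imsetP[e he ->]|/imset2P[e x he hx ->]]; first by left; exists e.
  by right; exists e, x.
case=> [[e he ->]|[e [x [he hx ->]]]]; first by left; apply/imsetP; exists e.
by right; apply/imset2P; exists e x.
Qed.

Lemma ts_sym (W : finType) (F : {set {set W}}) x y :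
  two_section F x y = two_section F y x.
Proof.
rewrite /two_section eq_sym; congr andb; apply: eq_existsb => e.
by rewrite [(y \in e) && _]andbC.
Qed.

Lemma step_ll x y :
  two_section (ilth_step E) (inl x) (inl y) = two_section E x y.
Proof.
rewrite /two_section.
have -> : (inl x != inl y :> V + V) = (x != y).
  apply/idP/idP => h; apply/eqP => e.
    by subst; rewrite eqxx in h.
  by case: e => e; rewrite e eqxx in h.
congr andb; apply/existsP/existsP => -[e' /andP[he' /andP[hx hy]]].
  case/step_mem: he' => [[e he De]|[e [x0 [he hx0 De]]]]; subst e'.
    by exists e; rewrite he -!(in_il_img e) hx hy.
  move: hx hy; rewrite !in_setU !in_set1 !in_il_img.
  have ne : forall z, (inl z == inr x0 :> V + V) = false by [].
  rewrite !ne !orbF !in_setD1 => /andP[_ hx] /andP[_ hy].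
  by exists e; rewrite he hx hy.
exists [set (@inl V V) z | z in e']; rewrite !in_il_img hx hy andbT.
apply/andP; split => //; apply/step_mem; left; by exists e'.
Qed.

Lemma step_lr x y :
  two_section (ilth_step E) (inl x) (inr y) = two_section E x y.
Proof.
rewrite /two_section.
have -> : (inl x != inr y :> V + V) = true by [].
apply/existsP/andP.
  move=> -[e' /andP[he' /andP[hx hy]]].
  case/step_mem: he' => [[e he De]|[e [x0 [he hx0 De]]]]; subst e'.
    by rewrite in_ir_img in hy.
  move: hx hy; rewrite !in_setU !in_set1 !in_il_img in_ir_img /=.
  have ne : (inl x == inr x0 :> V + V) = false by [].
  rewrite ne orbF => hx /eqP [eyx]; subst x0.
  move: hx; rewrite in_setD1 => /andP[-> hx]; split => //.
  by apply/existsP; exists e; rewrite he hx hx0.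
move=> [hne /existsP[e /andP[he /andP[hx hy]]]].
exists ([set (@inl V V) z | z in e :\ y] :|: [set (@inr V V y)]).
apply/andP; split; first by apply/step_mem; right; exists e, y.
by rewrite !in_setU !in_set1 in_il_img in_setD1 hne hx eqxx orbT.
Qed.

Lemma step_rl x y :
  two_section (ilth_step E) (inr x) (inl y) = two_section E x y.
Proof. by rewrite ts_sym step_lr ts_sym. Qed.

Lemma step_rr x y :
  two_section (ilth_step E) (inr x) (inr y) = false.
Proof.
apply/negbTE/andP => -[hne /existsP[e' /andP[he' /andP[hx hy]]]].
case/step_mem: he' => [[e he De]|[e [x0 [he hx0 De]]]]; subst e'.
  by rewrite in_ir_img in hx.
move: hx hy; rewrite !in_setU !in_set1 !in_ir_img /=.
by move=> /eqP[ex] /eqP[ey]; subst; rewrite eqxx in hne.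
Qed.

End Step.

Fixpoint build (V : finType) (t : nat) (v : V) (P : nat -> bool) : ilth_V V t :=
  match t return ilth_V V t with
  | 0 => v
  | t'.+1 => if P t' then inr (build t' v P) else inl (build t' v P)
  end.

Fixpoint disj (t : nat) (P Q : nat -> bool) : bool :=
  if t is t'.+1 then ~~ (P t' && Q t') && disj t' P Q else true.

Fixpoint proj (V : finType) (t : nat) : ilth_V V t -> V :=
  match t return ilth_V V t -> V with
  | 0 => fun x => x
  | t'.+1 => fun x => match x with inl y => proj y | inr y => proj y end
  end.

Lemma build_adj (V : finType) (E : {set {set V}}) t v u P Q :
  two_section (ilth_E E t) (build t v P) (build t u Q) = two_section E v u && disj t P Q.
Proof.
elim: t => [|t IH] /=; first by rewrite andbT.
case: (P t); case: (Q t);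
  rewrite ?step_ll ?step_lr ?step_rl ?step_rr ?IH /= ?andbF //.
Qed.

Lemma disj_false t (P Q : nat -> bool) i : i < t -> P i -> Q i -> disj t P Q = false.
Proof.
elim: t => [|t IH] //=; rewrite ltnS leq_eqVlt => /orP[/eqP <-|hi] hP hQ.
  by rewrite hP hQ.
by rewrite IH // andbF.
Qed.

Lemma disj_true t (P Q : nat -> bool) : (forall i, i < t -> ~~ (P i && Q i)) -> disj t P Q.
Proof.
elim: t => [|t IH] //= h; rewrite h // IH // => i hi; apply: h.
exact: ltnW.
Qed.

Lemma build_inj (V : finType) t (v u : V) P Q :
  build t v P = build t u Q -> forall i, i < t -> P i = Q i.
Proof.
elim: t => [|t IH] //= h i; rewrite ltnS leq_eqVlt => /orP[/eqP ->|hi].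
  by move: h; case: (P t); case: (Q t) => // h; discriminate.
by apply: IH => //; move: h; case: (P t); case: (Q t) => //= -[].
Qed.

Lemma proj_hom (V : finType) (E : {set {set V}}) t a b :
  two_section (ilth_E E t) a b -> two_section E (proj a) (proj b).
Proof.
elim: t a b => [|t IH] //= [a|a] [b|b];
  rewrite ?step_ll ?step_lr ?step_rl ?step_rr //; exact: IH.
Qed.

Theorem theorem3p1 (k : nat) (V : finType) (E : {set {set V}})
  (hk : 2 <= k) (hE : k_uniform k E)
  (T : finType) (g : rel T) (gsym : symmetric g) (girr : irreflexive g) :
  (exists f : T -> V, graph_hom g (two_section E) f) <->
  (exists t : nat, exists f : T -> ilth_V V t,
      induced_embedding g (two_section (ilth_E E t)) f).
Proof.
split; last first.
  move=> [t [f [_ hf]]]; exists (fun x => proj (f x)) => x y hxy.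
  by apply: proj_hom; rewrite -hf.
move=> [f hf].
pose t := #|{: T * T}|.
pose P (a : T) (i : nat) := [exists p : T * T,
   (i == enum_rank p) && ((p.1 == a) || (p.2 == a)) && ~~ g p.1 p.2].
have PP : forall a i, P a i -> exists p : T * T,
    [/\ i = enum_rank p, (p.1 == a) || (p.2 == a) & ~~ g p.1 p.2].
  move=> a i /existsP[p /andP[/andP[/eqP -> h1] h2]]; by exists p.
have Pin : forall a (p : T * T), (p.1 == a) || (p.2 == a) -> ~~ g p.1 p.2 ->
    P a (enum_rank p).
  move=> a p h1 h2; apply/existsP; exists p; by rewrite eqxx h1 h2.
have rk : forall p q : T * T, (enum_rank p : nat) = enum_rank q -> p = q.
  by move=> p q /val_inj /enum_rank_inj.
exists t, (fun a => build t (f a) (P a)); split.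
  move=> a b /build_inj h.
  have := h _ (ltn_ord (enum_rank (a, a))).
  rewrite Pin /= ?eqxx ?girr // => /esym /PP [p [/rk <- /= hb _]].
  by rewrite orbb in hb; apply/eqP.
move=> a b; rewrite build_adj.
case gab: (g a b).
  rewrite hf //=; apply/esym/disj_true => i hi; apply/negP => /andP[].
  move=> /PP[p [-> ha hn]] /PP[q [/rk <- hb _]].
  have nab : a != b by apply/eqP => eab; subst b; rewrite girr in gab.
  case: p ha hb hn => x y /= ha hb hn.
  case/orP: ha => /eqP ea; case/orP: hb => /eqP eb; subst.
  - by rewrite eqxx in nab.
  - by rewrite gab in hn.
  - by rewrite gsym gab in hn.
  - by rewrite eqxx in nab.
case: (eqVneq a b) => [<-|nab]; first by rewrite /two_section eqxx.
rewrite (@disj_false _ _ _ (enum_rank (a, b))) ?andbF //.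
  by apply: Pin; rewrite /= ?eqxx ?gab.
by apply: Pin; rewrite /= ?eqxx ?gab ?orbT.
Qed.
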